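(* Let $\mathcal{L} = \prod_{i=1}^{r} C(n_i)$ be a product of chain lattices (a square lattice), let $\beta = (\rho, \ldots, \rho, b, \rho, \ldots, \rho)$ where $b$ is the maximal element of the factor $C(n_i)$ in some position $i$ and every other coordinate is the minimum $\rho$ of its chain (so $\beta$ is a maximal join-irreducible element of $\mathcal{L}$), let $B_\beta = \mathcal{L} \setminus \mathcal{L}_\beta = \{\gamma \in \mathcal{L} : \gamma \geq \beta\}$, and let $\alpha \in \mathcal{L}_\beta$. Then \[ |E_\alpha| - |E_\alpha(\mathcal{L}_\beta)| \geq |B_\beta| - 1. \]
   Context: $C(n)$ is the chain (totally ordered) lattice with $n$ elements; the product carries the componentwise order. $\mathcal{L}_\beta = \{\gamma \in \mathcal{L} : \gamma \not\geq \beta\}$ (the pruning of $\mathcal{L}$ at $\beta$, i.e. the lattice of hereditary subsets of the join-irreducible poset with $\beta$ removed). A diamond in a lattice $\mathcal{M}$ is a set $\{x, y, x\vee y, x\wedge y\}$ with $x, y \in \mathcal{M}$ non-comparable. For $\alpha \in \mathcal{M}$, $E_\alpha(\mathcal{M}) = \{(\alpha,\gamma) : \text{some diamond of } \mathcal{M} \text{ contains both } \alpha \text{ and } \gamma\}$, and $E_\alpha = E_\alpha(\mathcal{L})$. *)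

(* Defs.v *)
From mathcomp Require Import all_boot all_order all_algebra.
Set Implicit Arguments. Unset Strict Implicit. Unset Printing Implicit Defensive.

(* The square lattice L = prod_{j < r} C(n j); C(m) is the chain 'I_m
   = {0 < 1 < ... < m-1}. Elements are dependent finite functions. *)
Definition sqlat (r : nat) (n : 'I_r -> nat) : finType :=
  {dffun forall j : 'I_r, 'I_(n j)}.

Section SqLat.
Variables (r : nat) (n : 'I_r -> nat).

Definition sq_le (x y : sqlat n) : bool := [forall j, (x j <= y j)%N].

Definition sq_join (x y : sqlat n) : sqlat n :=
  [ffun j => if (x j <= y j)%N then y j else x j].
Definition sq_meet (x y : sqlat n) : sqlat n :=
  [ffun j => if (x j <= y j)%N then x j else y j].

Definition sq_noncomparable (x y : sqlat n) : bool :=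
  ~~ sq_le x y && ~~ sq_le y x.

Definition diamond_set (x y : sqlat n) : {set sqlat n} :=
  [set x; y; sq_join x y; sq_meet x y].

(* M is used with the lattice operations of L (L and L_beta are sublattices). *)
Definition E_alpha (M : {set sqlat n}) (a : sqlat n) : {set sqlat n * sqlat n} :=
  [set p | (p.1 == a) &&
     [exists x in M, exists y in M,
        [&& sq_noncomparable x y, a \in diamond_set x y & p.2 \in diamond_set x y]]].

(* pruning L_beta = {gamma : ~ gamma >= beta} and B_beta = {gamma : gamma >= beta} *)
Definition prune (beta : sqlat n) : {set sqlat n} := [set g | ~~ sq_le beta g].
Definition Bset (beta : sqlat n) : {set sqlat n} := [set g | sq_le beta g].

End SqLat.

(* Main.v *)
Require Import Defs.
From mathcomp Require Import all_boot all_order all_algebra.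
Import GRing.Theory Num.Theory.

Set Implicit Arguments.
Section Aux.
Variables (r : nat) (n : 'I_r -> nat) (i : 'I_r) (beta : sqlat n).
Hypothesis hbeta : forall j : 'I_r, (beta j : nat) = (if j == i then (n i).-1 else 0%N).

Lemma le_beta (g : sqlat n) : sq_le beta g = ((n i).-1 <= g i)%N.
Proof.
apply/forallP/idP => [/(_ i)|H j]; first by rewrite hbeta eqxx.
rewrite hbeta; case: eqP => [->|_] //.
Qed.

Lemma E_sub M a : E_alpha M a \subset E_alpha [set: sqlat n] a.
Proof.
apply/subsetP => p; rewrite !inE => /andP[-> /existsP[x /andP[_ /existsP[y /andP[_ H]]]]].
by apply/existsP; exists x; rewrite in_setT /=; apply/existsP; exists y; rewrite in_setT /=.
Qed.

Lemma diam_low (x y z : sqlat n) : (x i < (n i).-1)%N -> (y i < (n i).-1)%N ->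
  z \in diamond_set x y -> (z i < (n i).-1)%N.
Proof.
move=> hx hy; rewrite !inE -!orbA => /or4P[] /eqP ->; rewrite ?ffunE //;
by case: ifP.
Qed.

Lemma notin_prune (a g : sqlat n) : (n i).-1 <= g i -> (a, g) \notin E_alpha (prune beta) a.
Proof.
move=> hg; apply/negP; rewrite inE => /andP[_ /existsP[x /andP[hx /existsP[y /andP[hy H]]]]].
move: H => /and3P[_ _ /= hd].
move: hx hy; rewrite !inE !le_beta -!ltnNge => hx hy.
by have := diam_low hx hy hd; rewrite ltnNge hg.
Qed.

End Aux.
Unset Implicit Arguments.

Theorem mainTheorem10 (r : nat) (n : 'I_r -> nat) (i : 'I_r) (beta : sqlat n)
  (hbeta : forall j : 'I_r, (beta j : nat) = (if j == i then (n i).-1 else 0%N))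
  (alpha : sqlat n) (halpha : alpha \in prune beta) :
  ((#|E_alpha [set: sqlat n] alpha|%:Z - #|E_alpha (prune beta) alpha|%:Z)
     >= #|Bset beta|%:Z - 1)%R.
Proof.
set EL := E_alpha _ alpha; set EP := E_alpha _ alpha.
set g0 : sqlat n := [ffun j => if j == i then beta j else alpha j].
have ha : (alpha i < (n i).-1)%N by move: halpha; rewrite inE (@le_beta _ _ i beta hbeta) -ltnNge.
have hsub : [set (alpha, g) | g in Bset beta :\ g0] \subset EL :\: EP.
  apply/subsetP => p /imsetP[g] /setD1P[hg0]; rewrite inE (@le_beta _ _ i beta hbeta) => hg ->.
  rewrite in_setD; apply/andP; split; first by apply: (@notin_prune _ _ i beta hbeta).
  rewrite inE /= eqxx /=.
  have hgi : (g i : nat) = (n i).-1.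
    by apply/eqP; rewrite eqn_leq hg andbT -ltnS prednK ?ltn_ord // (leq_ltn_trans _ (ltn_ord (g i))).
  have hai : (alpha i < g i)%N by rewrite hgi.
  have nle_ga : ~~ sq_le g alpha.
    by apply/negP => /forallP/(_ i); rewrite leqNgt hai.
  case hle: (sq_le alpha g).
  - set x : sqlat n := [ffun j => if j == i then g j else alpha j].
    set y : sqlat n := [ffun j => if j == i then alpha j else g j].
    have [j hji hj] : exists2 j, j != i & (alpha j < g j)%N.
      apply/exists_inP; apply: contraNT hg0 => /exists_inPn H.
      apply/eqP/ffunP => j; rewrite ffunE; case: eqP => [->|/eqP hji].
        by apply/val_inj; rewrite /= hgi hbeta eqxx.
      apply/val_inj/eqP; rewrite eqn_leq.
      by move: (H j hji); rewrite -leqNgt => ->; move/forallP: hle => ->.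
    apply/existsP; exists x; rewrite in_setT /=; apply/existsP; exists y; rewrite in_setT /=.
    have hm : sq_meet x y = alpha.
      apply/ffunP => k; rewrite !ffunE; case: eqP => [->|_].
        by rewrite leqNgt hai.
      by move/forallP: hle => ->.
    have hj' : sq_join x y = g.
      apply/ffunP => k; rewrite !ffunE; case: eqP => [->|_].
        by rewrite leqNgt hai.
      by move/forallP: hle => ->.
    apply/and3P; split; [| by rewrite !inE hm eqxx !orbT | by rewrite !inE hj' eqxx !orbT].
    rewrite /sq_noncomparable; apply/andP; split; apply/negP => /forallP.
      by move/(_ i); rewrite !ffunE eqxx leqNgt hai.
    by move/(_ j); rewrite !ffunE (negbTE hji) leqNgt hj.
  - apply/existsP; exists alpha; rewrite in_setT /=; apply/existsP; exists g; rewrite in_setT /=.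
    by rewrite /sq_noncomparable hle nle_ga !inE !eqxx !orbT.
have h1 := subset_leq_card hsub.
rewrite card_imset in h1; last by move=> u v [].
have h2 : #|EL| = (#|EL :\: EP| + #|EP|)%N.
  by rewrite -(cardsID EP EL) addnC (setIidPr (E_sub _ _)).
have h3 := cardsD1 g0 (Bset beta).
rewrite h2 PoszD addrK lerBlDr -PoszD lez_nat h3 addnC.
exact: (leq_add h1 (leq_b1 _)).
Qed.
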